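(* Let $M=\mathrm{Mon}\langle\Sigma\mid R\rangle$ be a finitely presented monoid and $\mathfrak{R}$ a complete rewriting system for $M$. Let $u,v\in\Sigma^*$. If there exists a word $z$ such that $u\sim z$ and $v\sim z$, then $u\equiv_M v$.
   Context: $=_M$ is equality in $M$. A rewriting system is a set of rules $l\to r$ ($l,r\in\Sigma^*$); $plq\to prq$ is one rewriting step; $\mathfrak{R}$ is complete for $M$ if terminating, confluent, and its generated congruence on $\Sigma^*$ is $=_M$. $u\rightsquigarrow v$ means some cyclic conjugate $\tilde u$ of $u$ in $\Sigma^*$ (possibly $u$) satisfies $\tilde u\to v$; $\rightsquigarrow^*$ is its reflexive–transitive closure. For words $u,v$, $u\sim v$ means $u\rightsquigarrow^* v$ and $v\rightsquigarrow^* u$. $u\equiv_M v$ means there exist $x,y\in\Sigma^*$ with $ux=_M xv$ and $yu=_M vy$. *)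

(* Defs.v *)
From mathcomp Require Import all_boot.
From Stdlib Require Import Relations.
Set Implicit Arguments. Unset Strict Implicit. Unset Printing Implicit Defensive.

Definition rstep (Sigma : Type) (rules : seq Sigma -> seq Sigma -> Prop)
  (w w' : seq Sigma) : Prop :=
  exists p l r q, rules l r /\ w = p ++ l ++ q /\ w' = p ++ r ++ q.

Definition rsteps (Sigma : Type) rules := clos_refl_trans (seq Sigma) (@rstep Sigma rules).

Definition rcong (Sigma : Type) rules := clos_refl_sym_trans (seq Sigma) (@rstep Sigma rules).

Definition rules_of (Sigma : eqType) (R : seq (seq Sigma * seq Sigma))
  (l r : seq Sigma) : Prop := (l, r) \in R.

Definition eqM (Sigma : eqType) (R : seq (seq Sigma * seq Sigma)) (a b : seq Sigma) : Prop :=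
  rcong (rules_of R) a b.

Definition terminating (Sigma : Type) rules : Prop :=
  well_founded (fun a b : seq Sigma => @rstep Sigma rules b a).

Definition confluent (Sigma : Type) rules : Prop :=
  forall w a b : seq Sigma, rsteps rules w a -> rsteps rules w b ->
    exists c, rsteps rules a c /\ rsteps rules b c.

Definition complete_for (Sigma : eqType) (rules : seq Sigma -> seq Sigma -> Prop)
  (R : seq (seq Sigma * seq Sigma)) : Prop :=
  terminating rules /\ confluent rules /\
  (forall a b, rcong rules a b <-> eqM R a b).

Definition cstep (Sigma : Type) rules (u v : seq Sigma) : Prop :=
  exists s t, u = s ++ t /\ rstep rules (t ++ s) v.

Definition csteps (Sigma : Type) rules := clos_refl_trans (seq Sigma) (@cstep Sigma rules).

Definition csim (Sigma : Type) rules (u v : seq Sigma) : Prop :=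
  csteps rules u v /\ csteps rules v u.

Definition conjM (Sigma : eqType) (R : seq (seq Sigma * seq Sigma)) (u v : seq Sigma) : Prop :=
  exists x y, eqM R (u ++ x) (x ++ v) /\ eqM R (y ++ u) (v ++ y).

(* Main.v *)
Require Import Defs.
From mathcomp Require Import all_boot.
From Stdlib Require Import Relations.

Section S.
Variable Sigma : Type.
Variable rules : seq Sigma -> seq Sigma -> Prop.

Lemma rstep_ctx p q a b : rstep rules a b -> rstep rules (p ++ a ++ q) (p ++ b ++ q).
Proof.
move=> [p' [l [r [q' [H [-> ->]]]]]].
exists (p ++ p'), l, r, (q' ++ q); split=> //; split; by rewrite !catA.
Qed.

Lemma rcong_ctx p q a b : rcong rules a b -> rcong rules (p ++ a ++ q) (p ++ b ++ q).
Proof.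
elim=> [x y H| x | x y _ IH | x y z _ IH1 _ IH2].
- by apply: rst_step; apply: rstep_ctx.
- exact: rst_refl.
- exact: rst_sym.
- exact: rst_trans IH1 IH2.
Qed.

Lemma rcong_r q a b : rcong rules a b -> rcong rules (a ++ q) (b ++ q).
Proof. by move=> H; have := @rcong_ctx [::] q a b H. Qed.
Lemma rcong_l p a b : rcong rules a b -> rcong rules (p ++ a) (p ++ b).
Proof. by move=> H; have := @rcong_ctx p [::] a b H; rewrite !cats0. Qed.

Definition cj (u v : seq Sigma) :=
  exists x y, rcong rules (u ++ x) (x ++ v) /\ rcong rules (y ++ u) (v ++ y).

Lemma cj_refl u : cj u u.
Proof. exists [::], [::]; rewrite cats0 /=; split; exact: rst_refl. Qed.

Lemma cj_sym u v : cj u v -> cj v u.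
Proof. move=> [x [y [H1 H2]]]; exists y, x; split; exact: rst_sym. Qed.

Lemma cj_trans u v w : cj u v -> cj v w -> cj u w.
Proof.
move=> [x1 [y1 [H1 H2]]] [x2 [y2 [H3 H4]]]; exists (x1 ++ x2), (y2 ++ y1); split.
- apply: rst_trans (_ : rcong rules _ (x1 ++ v ++ x2)) _.
  + by have := @rcong_r x2 _ _ H1; rewrite -!catA.
  + by have := @rcong_l x1 _ _ H3; rewrite !catA.
- apply: rst_trans (_ : rcong rules _ (y2 ++ v ++ y1)) _.
  + by have := @rcong_l y2 _ _ H2; rewrite !catA.
  + by have := @rcong_r y1 _ _ H4; rewrite -!catA.
Qed.

Lemma cstep_cj u v : cstep rules u v -> cj u v.
Proof.
move=> [s [t [-> H]]].
apply: (@cj_trans _ (t ++ s)).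
- exists s, t; split; rewrite -!catA; exact: rst_refl.
- by exists [::], [::]; split; rewrite ?cats0 /=; apply: rst_step.
Qed.

Lemma csteps_cj u v : csteps rules u v -> cj u v.
Proof.
elim=> [x y H | x | x y z _ IH1 _ IH2]; [exact: cstep_cj | exact: cj_refl | exact: cj_trans IH1 IH2].
Qed.
End S.

Theorem proposition7p3 (Sigma : finType) (R : seq (seq Sigma * seq Sigma))
  (rules : seq Sigma -> seq Sigma -> Prop) :
  complete_for rules R ->
  forall u v : seq Sigma,
  (exists z, csim rules u z /\ csim rules v z) ->
  conjM R u v.
Proof.
move=> [_ [_ Heq]] u v [z [[Hu _] [Hv _]]].
have [x [y [H1 H2]]] := @cj_trans _ rules u z v (@csteps_cj _ rules u z Hu) (@cj_sym _ rules v z (@csteps_cj _ rules v z Hv)).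
by exists x, y; split; apply/Heq.
Qed.
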